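(* Let $\mathcal{R}^{rsc}$ be a rich single-crossing domain and $F:\mathcal{R}^{rsc}\to\mathbb{Z}$ a mechanism such that $F$ is monotone, $V^F$ is continuous, and the range $Rn(F)$ is finite. Then $F$ is strategy-proof. (The same holds when $\mathcal{R}^{rsc}$ is replaced by a closed interval $[\underline R,\overline R]\subseteq\mathcal{R}^{rsc}$.)
   Context: $\mathbb{Z}=[0,\infty)\times[0,1]$; $(t',q')<(t'',q'')$ means $t'<t''$, $q'<q''$; $x\le y$ means $x=y$ or $x<y$; $\square(z)=\{x:x\le z\}$. A classical preference is a complete transitive relation $R$ on $\mathbb{Z}$ (strict part $P$, indifference $I$) strictly decreasing in $t$ for fixed $q$, strictly increasing in $q$ for fixed $t$, with closed upper and lower contour sets. Distinct classical preferences satisfy single-crossing if any indifference set of one meets any indifference set of the other in at most one point. A rich single-crossing domain $\mathcal{R}^{rsc}$ is a set of pairwise single-crossing classical preferences such that for all $x'<x''$ some member is indifferent between them. For distinct members, $R'\prec R''$ means $\square(z)\cap\{x:xR''z\}\subseteq\square(z)\cap\{x:xR'z\}$ for all $z$; $\prec$ is a linear order and $\mathcal{R}^{rsc}$ has the order topology. A mechanism $F$ maps the domain into $\mathbb{Z}$; it is strategy-proof if $F(R')R'F(R'')$ for all $R',R''$, and monotone if $R'\prec R''$ implies $F(R')\le F(R'')$. $V^F(R)=\{z: zIF(R)\}$ is continuous if for every $R$ and every monotone sequence $R^n\to R$ in the order topology (i.e. $R^n\precsim R^{n+1}$ for all $n$, or $R^{n+1}\precsim R^n$ for all $n$), $F(R^n)$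 converges in $\mathbb{Z}$ and $\lim F(R^n)\,I\,F(R)$. *)

(* Defs.v *)
From Stdlib Require Import Reals List.
Open Scope R_scope.

(* The consumption set  Z = [0,oo) x [0,1]  (first coordinate t, second q). *)
Definition inZ (x : R * R) : Prop :=
  0 <= fst x /\ 0 <= snd x /\ snd x <= 1.

Definition ltZ (x y : R * R) : Prop := fst x < fst y /\ snd x < snd y.
Definition leZ (x y : R * R) : Prop := x = y \/ ltZ x y.
Definition box (z x : R * R) : Prop := inZ x /\ leZ x z.

Definition Pref := R * R -> R * R -> Prop.

Definition strictP (Rl : Pref) (x y : R * R) : Prop := Rl x y /\ ~ Rl y x.
Definition indiff (Rl : Pref) (x y : R * R) : Prop := Rl x y /\ Rl y x.

(* Convergence of a sequence in R^2 (Euclidean topology = componentwise). *)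
Definition cvZ (u : nat -> R * R) (a : R * R) : Prop :=
  Un_cv (fun n => fst (u n)) (fst a) /\ Un_cv (fun n => snd (u n)) (snd a).

(* A subset S of Z is closed (in Z, equivalently in R^2 since Z is closed):
   it contains the limits (in Z) of its convergent sequences. *)
Definition closedZ (S : R * R -> Prop) : Prop :=
  forall (u : nat -> R * R) (a : R * R),
    (forall n, inZ (u n) /\ S (u n)) -> inZ a -> cvZ u a -> S a.

Definition classical (Rl : Pref) : Prop :=
  (forall x y, Rl x y -> inZ x /\ inZ y) /\
  (forall x y, inZ x -> inZ y -> Rl x y \/ Rl y x) /\
  (forall x y z, Rl x y -> Rl y z -> Rl x z) /\
  (forall t t' q, inZ (t, q) -> inZ (t', q) -> t < t' -> strictP Rl (t, q) (t', q)) /\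
  (forall t q q', inZ (t, q) -> inZ (t, q') -> q < q' -> strictP Rl (t, q') (t, q)) /\
  (forall z, inZ z ->
     closedZ (fun x => inZ x /\ Rl x z) /\ closedZ (fun x => inZ x /\ Rl z x)).

Definition single_crossing (R1 R2 : Pref) : Prop :=
  forall z1 z2 x y,
    indiff R1 x z1 -> indiff R2 x z2 ->
    indiff R1 y z1 -> indiff R2 y z2 -> x = y.

Definition rich_single_crossing (dom : Pref -> Prop) : Prop :=
  (forall Rl, dom Rl -> classical Rl) /\
  (forall R1 R2, dom R1 -> dom R2 -> R1 <> R2 -> single_crossing R1 R2) /\
  (forall x1 x2, inZ x1 -> inZ x2 -> ltZ x1 x2 ->
     exists Rl, dom Rl /\ indiff Rl x1 x2).

Definition prec (R1 R2 : Pref) : Prop :=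
  R1 <> R2 /\
  forall z, inZ z -> forall x, box z x -> R2 x z -> R1 x z.
Definition precsim (R1 R2 : Pref) : Prop := prec R1 R2 \/ R1 = R2.

(* Convergence in the order topology of the linearly ordered set D
   (subbasis: open rays with endpoints in D). *)
Definition order_cv (D : Pref -> Prop) (Rs : nat -> Pref) (Rl : Pref) : Prop :=
  (forall A, D A -> prec A Rl -> exists N, forall n, (N <= n)%nat -> prec A (Rs n)) /\
  (forall B, D B -> prec Rl B -> exists N, forall n, (N <= n)%nat -> prec (Rs n) B).

Definition monotone_seq (Rs : nat -> Pref) : Prop :=
  (forall n, precsim (Rs n) (Rs (S n))) \/ (forall n, precsim (Rs (S n)) (Rs n)).

Definition mechanism (D : Pref -> Prop) (F : Pref -> R * R) : Prop :=
  forall Rl, D Rl -> inZ (F Rl).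

Definition strategy_proof (D : Pref -> Prop) (F : Pref -> R * R) : Prop :=
  forall R1 R2, D R1 -> D R2 -> R1 (F R1) (F R2).

Definition monotone_mech (D : Pref -> Prop) (F : Pref -> R * R) : Prop :=
  forall R1 R2, D R1 -> D R2 -> prec R1 R2 -> leZ (F R1) (F R2).

Definition VF_continuous (D : Pref -> Prop) (F : Pref -> R * R) : Prop :=
  forall (Rl : Pref) (Rs : nat -> Pref),
    D Rl -> (forall n, D (Rs n)) -> monotone_seq Rs -> order_cv D Rs Rl ->
    exists L, inZ L /\ cvZ (fun n => F (Rs n)) L /\ indiff Rl L (F Rl).

Definition finite_range (D : Pref -> Prop) (F : Pref -> R * R) : Prop :=
  exists l : list (R * R), forall Rl, D Rl -> In (F Rl) l.

Definition interval (dom : Pref -> Prop) (lo hi : Pref) (Rl : Pref) : Prop :=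
  dom Rl /\ precsim lo Rl /\ precsim Rl hi.

(* Main.v *)
Require Import Defs.
From Stdlib Require Import Reals List.
From Stdlib Require Import Lra Lia Classical ClassicalEpsilon.
Open Scope R_scope.

Lemma choice_nat {A : Type} (P : nat -> A -> Prop) :
  (forall n, exists a, P n a) -> exists f : nat -> A, forall n, P n (f n).
Proof.
  intro H. exists (fun n => proj1_sig (constructive_indefinite_description _ (H n))).
  intro n. exact (proj2_sig (constructive_indefinite_description _ (H n))).
Qed.

Lemma inv_small (eps : R) : 0 < eps -> exists N : nat, forall n, (N <= n)%nat -> / (INR n + 1) < eps.
Proof.
  intro He. destruct (archimed_cor1 eps He) as [N [HN HN0]].
  exists N. intros n Hn.
  assert (INR N <= INR n) by (apply le_INR; lia).
  assert (0 < INR N) by (apply lt_0_INR; lia).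
  apply Rle_lt_trans with (/ INR N); auto.
  apply Rinv_le_contravar; lra.
Qed.

Lemma cv_bound (u : nat -> R) (l K : R) :
  (forall n, Rabs (u n - l) <= K / (INR n + 1)) -> Un_cv u l.
Proof.
  intros H eps He.
  assert (HK : 0 < Rabs K + 1) by (pose proof (Rabs_pos K); lra).
  destruct (inv_small (eps / (Rabs K + 1))) as [N HN].
  { apply Rdiv_lt_0_compat; lra. }
  exists N. intros n Hn. unfold Rdist.
  specialize (HN n Hn). specialize (H n).
  assert (Hp : 0 < INR n + 1) by (pose proof (pos_INR n); lra).
  assert (K / (INR n + 1) <= (Rabs K + 1) * / (INR n + 1)).
  { unfold Rdiv. apply Rmult_le_compat_r. left; apply Rinv_0_lt_compat; lra.
    pose proof (Rle_abs K); lra. }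
  assert ((Rabs K + 1) * / (INR n + 1) < (Rabs K + 1) * (eps / (Rabs K + 1))).
  { apply Rmult_lt_compat_l; lra. }
  assert ((Rabs K + 1) * (eps / (Rabs K + 1)) = eps) by (field; lra).
  lra.
Qed.

Lemma cv_in (u : nat -> R) (l a b : R) :
  (forall n, a <= u n <= b) -> Un_cv u l -> a <= l <= b.
Proof.
  intros H Hc. split.
  - destruct (Rle_or_lt a l) as [h|h]; auto.
    destruct (Hc (a - l)) as [N HN]; [lra|].
    specialize (HN N (le_n N)). specialize (H N). unfold Rdist in HN.
    apply Rabs_def2 in HN. lra.
  - destruct (Rle_or_lt l b) as [h|h]; auto.
    destruct (Hc (l - b)) as [N HN]; [lra|].
    specialize (HN N (le_n N)). specialize (H N). unfold Rdist in HN.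
    apply Rabs_def2 in HN. lra.
Qed.

Definition closedI (a b : R) (S : R -> Prop) : Prop :=
  forall u l, (forall n, a <= u n <= b /\ S (u n)) -> Un_cv u l -> S l.

Lemma cover_closed (a b : R) (A B : R -> Prop) :
  a <= b -> A a -> B b -> (forall s, a <= s <= b -> A s \/ B s) ->
  closedI a b A -> closedI a b B -> exists s, a <= s <= b /\ A s /\ B s.
Proof.
  intros Hab Ha Hb Hcov HA HB.
  set (E := fun s => a <= s <= b /\ A s).
  assert (Hbd : bound E) by (exists b; intros x [Hx _]; lra).
  assert (Hne : exists x, E x) by (exists a; split; [lra|auto]).
  destruct (completeness E Hbd Hne) as [m [Hub Hlub]].
  assert (Ham : a <= m) by (apply Hub; split; [lra|auto]).
  assert (Hmb : m <= b) by (apply Hlub; intros x [Hx _]; lra).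
  assert (HAm : A m).
  { assert (Hex : forall n, exists s, a <= s <= b /\ A s /\ m - / (INR n + 1) < s <= m).
    { intro n. apply NNPP. intro Hn.
      assert (Hp : 0 < / (INR n + 1)) by (apply Rinv_0_lt_compat; pose proof (pos_INR n); lra).
      assert (m <= m - / (INR n + 1)); [|lra].
      apply Hlub. intros x [Hx HAx].
      destruct (Rle_or_lt x (m - / (INR n + 1))) as [h|h]; auto.
      exfalso. apply Hn. exists x. assert (x <= m) by (apply Hub; split; auto).
      split; [auto|split; [auto|lra]]. }
    destruct (choice_nat _ Hex) as [u Hu].
    apply (HA u m).
    - intro n. destruct (Hu n) as [h1 [h2 _]]. split; auto.
    - apply cv_bound with 1. intro n. destruct (Hu n) as [_ [_ [h3 h4]]].
      unfold Rdiv. rewrite Rmult_1_l. apply Rabs_le. lra. }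
  destruct (Rle_lt_or_eq_dec m b Hmb) as [Hlt|Heq].
  - exists m. split; [lra|]. split; auto.
    apply (HB (fun n => m + (b - m) / (INR n + 2)) m).
    + intro n. assert (Hp : 0 < INR n + 2) by (pose proof (pos_INR n); lra).
      assert (0 < (b - m) / (INR n + 2)) by (apply Rdiv_lt_0_compat; lra).
      assert ((b - m) / (INR n + 2) <= b - m).
      { assert (/ (INR n + 2) <= 1).
        { replace 1 with (/1) by (apply Rinv_1). pose proof (pos_INR n). apply Rinv_le_contravar; lra. }
        assert (0 < / (INR n + 2)) by (apply Rinv_0_lt_compat; lra).
        unfold Rdiv. nra. }
      split; [lra|].
      destruct (Hcov (m + (b - m) / (INR n + 2))) as [h|h]; [lra| |auto].
      exfalso. assert (m + (b - m) / (INR n + 2) <= m); [|lra].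
      apply Hub. split; [lra|auto].
    + apply cv_bound with (b - m). intro n.
      assert (Hp : 0 < INR n + 1) by (pose proof (pos_INR n); lra).
      replace (m + (b - m) / (INR n + 2) - m) with ((b - m) / (INR n + 2)) by ring.
      rewrite Rabs_right.
      * unfold Rdiv. apply Rmult_le_compat_l; [lra|]. apply Rinv_le_contravar; lra.
      * apply Rle_ge. unfold Rdiv. apply Rmult_le_pos; [lra|]. left; apply Rinv_0_lt_compat; lra.
  - subst m. exists b. split; [lra|auto].
Qed.

Definition openI (a b : R) (O : R -> Prop) : Prop :=
  forall s, a <= s <= b -> O s -> exists d, d > 0 /\ forall s', a <= s' <= b -> Rabs (s' - s) < d -> O s'.

Lemma closed_of_open (a b : R) (O : R -> Prop) : openI a b O -> closedI a b (fun s => ~ O s).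
Proof.
  intros Ho u l Hu Hc HOl.
  assert (Hl : a <= l <= b) by (apply (cv_in u); auto; intro n; apply Hu).
  destruct (Ho l Hl HOl) as [d [Hd H]].
  destruct (Hc d Hd) as [N HN]. specialize (HN N (le_n N)).
  destruct (Hu N) as [h1 h2]. apply h2. apply H; auto.
Qed.

Lemma cover_open (a b : R) (O1 O2 : R -> Prop) :
  a <= b -> O1 a -> O2 b -> (forall s, a <= s <= b -> O1 s -> O2 s -> False) ->
  openI a b O1 -> openI a b O2 -> exists s, a <= s <= b /\ ~ O1 s /\ ~ O2 s.
Proof.
  intros Hab H1 H2 Hd Ho1 Ho2.
  destruct (cover_closed a b (fun s => ~ O2 s) (fun s => ~ O1 s)) as [s [Hs [h1 h2]]]; auto.
  - intro h. apply (Hd a); auto; lra.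
  - intro h. apply (Hd b); auto; lra.
  - intros s Hs. destruct (classic (O1 s)); auto. left. intro. apply (Hd s); auto.
  - apply closed_of_open; auto.
  - apply closed_of_open; auto.
  - exists s; auto.
Qed.

Lemma cl_inZ P x y : classical P -> P x y -> inZ x /\ inZ y.
Proof. intros [h _] H. auto. Qed.
Lemma cl_total P x y : classical P -> inZ x -> inZ y -> P x y \/ P y x.
Proof. intros [_ [h _]]. auto. Qed.
Lemma cl_refl P x : classical P -> inZ x -> P x x.
Proof. intros H hx. destruct (cl_total P x x H hx hx); auto. Qed.
Lemma cl_trans P x y z : classical P -> P x y -> P y z -> P x z.
Proof. intros [_ [_ [h _]]]. eauto. Qed.
Lemma cl_mt P t t' q : classical P -> inZ (t,q) -> inZ (t',q) -> t < t' -> strictP P (t,q) (t',q).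
Proof. intros [_ [_ [_ [h _]]]]. auto. Qed.
Lemma cl_mq P t q q' : classical P -> inZ (t,q) -> inZ (t,q') -> q < q' -> strictP P (t,q') (t,q).
Proof. intros [_ [_ [_ [_ [h _]]]]]. auto. Qed.
Lemma cl_closed_up P z : classical P -> inZ z -> closedZ (fun x => inZ x /\ P x z).
Proof. intros [_ [_ [_ [_ [_ h]]]]] hz. apply h; auto. Qed.
Lemma cl_closed_lo P z : classical P -> inZ z -> closedZ (fun x => inZ x /\ P z x).
Proof. intros [_ [_ [_ [_ [_ h]]]]] hz. apply h; auto. Qed.

Lemma not_P_strict P x y : classical P -> inZ x -> inZ y -> ~ P x y -> strictP P y x.
Proof. intros H hx hy hn. split; auto. destruct (cl_total P x y H hx hy); tauto. Qed.
Lemma strict_trans1 P x y z : classical P -> strictP P x y -> P y z -> strictP P x z.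
Proof. intros H [h1 h2] h3. split. eapply cl_trans; eauto. intro h4. apply h2. eapply cl_trans; eauto. Qed.
Lemma strict_trans2 P x y z : classical P -> P x y -> strictP P y z -> strictP P x z.
Proof. intros H h1 [h2 h3]. split. eapply cl_trans; eauto. intro h4. apply h3. eapply cl_trans; eauto. Qed.
Lemma strict_weak P x y : strictP P x y -> P x y.
Proof. intros [h _]; auto. Qed.
Lemma strict_irrefl P x y : strictP P x y -> P y x -> False.
Proof. intros [_ h] h'; auto. Qed.

Ltac zs := unfold inZ, ltZ in *; simpl in *.

Lemma dom_strict P t q t' q' : classical P -> inZ (t,q) -> inZ (t',q') -> t <= t' -> q' <= q ->
  (t,q) <> (t',q') -> strictP P (t,q) (t',q').
Proof.
  intros H h1 h2 ht hq hne.
  assert (hm : inZ (t,q')) by (zs; lra).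
  destruct (Rle_lt_or_eq_dec _ _ ht) as [ht'|ht']; destruct (Rle_lt_or_eq_dec _ _ hq) as [hq'|hq'].
  - apply strict_trans1 with (t,q'); auto. apply cl_mq; auto.
    apply strict_weak. apply cl_mt; auto; zs; lra.
  - subst. apply cl_mt; auto; zs; lra.
  - subst. apply cl_mq; auto; zs; lra.
  - subst. congruence.
Qed.

Definition near (d : R) (x y : R * R) : Prop :=
  Rabs (fst y - fst x) < d /\ Rabs (snd y - snd x) < d.

Lemma open_of_closedZ (S : R * R -> Prop) : closedZ S ->
  forall x, inZ x -> ~ S x -> exists d, d > 0 /\ forall y, inZ y -> near d x y -> ~ S y.
Proof.
  intros Hc x hx hn. apply NNPP. intro Hno.
  assert (Hex : forall n:nat, exists y, inZ y /\ near (/ (INR n + 1)) x y /\ S y).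
  { intro n. apply NNPP. intro Hn. apply Hno. exists (/ (INR n + 1)). split.
    - apply Rinv_0_lt_compat. pose proof (pos_INR n); lra.
    - intros y hy hnear hS. apply Hn. exists y. auto. }
  destruct (choice_nat _ Hex) as [u Hu].
  apply hn. apply (Hc u x); auto.
  - intro n. destruct (Hu n) as [h1 [_ h3]]; auto.
  - split; apply cv_bound with 1; intro n; destruct (Hu n) as [_ [[h1 h2] _]];
      unfold Rdiv; rewrite Rmult_1_l; left; auto.
Qed.

Lemma open_better P x z : classical P -> inZ z -> strictP P x z ->
  exists d, d > 0 /\ forall y, inZ y -> near d x y -> strictP P y z.
Proof.
  intros H hz hs.
  assert (hx : inZ x) by (destruct hs as [h _]; apply (cl_inZ P x z H h)).
  destruct (open_of_closedZ _ (cl_closed_lo P z H hz) x hx) as [d [hd Hd]].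
  { intros [_ h]. destruct hs; auto. }
  exists d. split; auto. intros y hy hn. apply not_P_strict; auto.
  intro h. apply (Hd y hy hn). split; auto.
Qed.

Lemma open_worse P x z : classical P -> inZ z -> strictP P z x ->
  exists d, d > 0 /\ forall y, inZ y -> near d x y -> strictP P z y.
Proof.
  intros H hz hs.
  assert (hx : inZ x) by (destruct hs as [h _]; apply (cl_inZ P z x H h)).
  destruct (open_of_closedZ _ (cl_closed_up P z H hz) x hx) as [d [hd Hd]].
  { intros [_ h]. destruct hs; auto. }
  exists d. split; auto. intros y hy hn. apply not_P_strict; auto.
  intro h. apply (Hd y hy hn). split; auto.
Qed.

Lemma lim_up P z u a : classical P -> inZ z -> (forall n, P (u n) z) -> inZ a -> cvZ u a -> P a z.
Proof.
  intros H hz hu ha hc.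
  assert (h := cl_closed_up P z H hz u a). refine (proj2 (h _ ha hc)).
  intro n. split; [apply (cl_inZ P _ z H (hu n))|]. split; auto. apply (cl_inZ P _ z H (hu n)).
Qed.
Lemma lim_lo P z u a : classical P -> inZ z -> (forall n, P z (u n)) -> inZ a -> cvZ u a -> P z a.
Proof.
  intros H hz hu ha hc.
  assert (h := cl_closed_lo P z H hz u a). refine (proj2 (h _ ha hc)).
  intro n. split; [apply (cl_inZ P z _ H (hu n))|]. split; auto. apply (cl_inZ P z _ H (hu n)).
Qed.

Lemma near_min d1 d2 x y : near (Rmin d1 d2) x y -> near d1 x y /\ near d2 x y.
Proof.
  unfold near. intros [h1 h2]. pose proof (Rmin_l d1 d2). pose proof (Rmin_r d1 d2).
  repeat split; lra.
Qed.

Definition lin (a b : R * R) (s : R) : R * R :=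
  (fst a + s * (fst b - fst a), snd a + s * (snd b - snd a)).

Lemma lin0 a b : lin a b 0 = a.
Proof. destruct a; unfold lin; simpl; f_equal; ring. Qed.
Lemma lin1 a b : lin a b 1 = b.
Proof. destruct a, b; unfold lin; simpl; f_equal; ring. Qed.

Lemma cv_const c : Un_cv (fun _ => c) c.
Proof. intros e he. exists 0%nat. intros n _. unfold Rdist. rewrite Rminus_diag, Rabs_R0. lra. Qed.

Lemma cv_aff u l a k : Un_cv u l -> Un_cv (fun n => a + u n * k) (a + l * k).
Proof.
  intro h. apply CV_plus. apply cv_const. apply CV_mult; auto. apply cv_const.
Qed.

Lemma lin_cv a b u l : Un_cv u l -> cvZ (fun n => lin a b (u n)) (lin a b l).
Proof. intro h. unfold cvZ, lin; simpl. split; apply cv_aff; auto. Qed.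

Lemma lin_inZ a b s : inZ a -> inZ b -> 0 <= s <= 1 -> inZ (lin a b s).
Proof.
  destruct a as [ta qa], b as [tb qb]. unfold inZ, lin; simpl. intros h1 h2 hs.
  repeat split; nra.
Qed.

Definition open2 (O : R * R -> Prop) : Prop :=
  forall w, inZ w -> O w -> exists d, d > 0 /\ forall w', inZ w' -> near d w w' -> O w'.

Lemma open2_param O a b : open2 O -> inZ a -> inZ b -> openI 0 1 (fun s => O (lin a b s)).
Proof.
  intros ho ha hb s hs hO.
  destruct (ho (lin a b s) (lin_inZ a b s ha hb hs) hO) as [d [hd H]].
  set (K := Rabs (fst b - fst a) + Rabs (snd b - snd a) + 1).
  assert (hK : 0 < K) by (unfold K; pose proof (Rabs_pos (fst b - fst a)); pose proof (Rabs_pos (snd b - snd a)); lra).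
  exists (d / K). split. apply Rdiv_lt_0_compat; lra.
  intros s' hs' hd'. apply H. apply lin_inZ; auto.
  unfold near, lin; simpl.
  assert (Habs : forall c, Rabs c <= K -> Rabs (s' - s) * Rabs c < d).
  { intros c hc. assert (Rabs (s' - s) * K < d).
    { apply Rmult_lt_reg_r with (/ K). apply Rinv_0_lt_compat; lra.
      rewrite Rmult_assoc, Rinv_r, Rmult_1_r; [|lra]. exact hd'. }
    pose proof (Rabs_pos (s' - s)). nra. }
  split.
  - replace (fst a + s' * (fst b - fst a) - (fst a + s * (fst b - fst a))) with ((s' - s) * (fst b - fst a)) by ring.
    rewrite Rabs_mult. apply Habs. unfold K. pose proof (Rabs_pos (snd b - snd a)). lra.
  - replace (snd a + s' * (snd b - snd a) - (snd a + s * (snd b - snd a))) with ((s' - s) * (snd b - snd a)) by ring.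
    rewrite Rabs_mult. apply Habs. unfold K. pose proof (Rabs_pos (fst b - fst a)). lra.
Qed.

Lemma ivt P a b c : classical P -> inZ a -> inZ b -> inZ c -> P a c -> P c b ->
  exists s, 0 <= s <= 1 /\ indiff P (lin a b s) c.
Proof.
  intros H ha hb hc h1 h2.
  destruct (cover_closed 0 1 (fun s => P (lin a b s) c) (fun s => P c (lin a b s))) as [s [hs [hA hB]]].
  - lra.
  - rewrite lin0; auto.
  - rewrite lin1; auto.
  - intros s hs. destruct (cl_total P (lin a b s) c H); auto. apply lin_inZ; auto.
  - intros u l hu hl. assert (hl' := cv_in u l 0 1 (fun n => proj1 (hu n)) hl).
    apply (lim_up P c (fun n => lin a b (u n))); auto. intro n; apply hu. apply lin_inZ; auto.
    apply lin_cv; auto.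
  - intros u l hu hl. assert (hl' := cv_in u l 0 1 (fun n => proj1 (hu n)) hl).
    apply (lim_lo P c (fun n => lin a b (u n))); auto. intro n; apply hu. apply lin_inZ; auto.
    apply lin_cv; auto.
  - exists s. split; auto. split; auto.
Qed.

Definition WE (X Y : Pref) (w : R * R) : Prop :=
  exists x, inZ x /\ ltZ x w /\ strictP Y x w /\ strictP X w x.

Definition SCw (X Y : Pref) (w : R * R) : Prop :=
  forall y, indiff X y w -> indiff Y y w -> y = w.

Lemma SCw_sym X Y w : SCw X Y w -> SCw Y X w.
Proof. intros h y h1 h2. apply h; auto. Qed.

Lemma SC_SCw X Y w : classical X -> classical Y -> inZ w -> single_crossing X Y -> SCw X Y w.
Proof.
  intros hX hY hw hs y h1 h2. apply (hs w w y w); auto; split; apply cl_refl; auto.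
Qed.

Lemma strengthen X Y x w : classical X -> classical Y -> inZ x -> inZ w -> ltZ x w ->
  Y x w -> ~ X x w -> WE X Y w.
Proof.
  intros hX hY hx hw hlt hYx hXx.
  destruct x as [t q], w as [tw qw].
  assert (hs : strictP X (tw,qw) (t,q)) by (apply not_P_strict; auto).
  destruct (open_worse X (t,q) (tw,qw) hX hw hs) as [d [hd H]].
  unfold ltZ in hlt; simpl in hlt.
  set (e := Rmin (d/2) ((qw - q)/2)).
  assert (he1 : e <= d/2) by apply Rmin_l.
  assert (he2 : e <= (qw - q)/2) by apply Rmin_r.
  assert (he : 0 < e) by (apply Rmin_pos; lra).
  assert (hy : inZ (t, q + e)) by (zs; lra).
  exists (t, q + e). split; auto. split. zs; lra. split.
  - apply strict_trans1 with (t,q); auto. apply cl_mq; auto. lra.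
  - apply H; auto. unfold near; simpl. replace (t - t) with 0 by ring.
    replace (q + e - q) with e by ring. rewrite Rabs_R0, Rabs_right; lra.
Qed.

Lemma WE_open X Y : classical X -> classical Y -> open2 (WE X Y).
Proof.
  intros hX hY w hw [x [hx [hlt [h1 h2]]]].
  destruct (open_worse Y w x hY hx h1) as [d1 [hd1 H1]].
  destruct (open_better X w x hX hx h2) as [d2 [hd2 H2]].
  unfold ltZ in hlt.
  set (d := Rmin (Rmin d1 d2) (Rmin (fst w - fst x) (snd w - snd x))).
  exists d. split.
  { unfold d. repeat apply Rmin_pos; lra. }
  intros w' hw' hn. unfold d in hn.
  apply near_min in hn. destruct hn as [hn hn']. apply near_min in hn. destruct hn as [hn1 hn2].
  apply near_min in hn'. destruct hn' as [[ha _] [_ hb]].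
  exists x. split; auto. split.
  - unfold ltZ. destruct hn1 as [k1 k2]. apply Rabs_def2 in k1, k2.
    unfold near in ha, hb. apply Rabs_def2 in ha. apply Rabs_def2 in hb. lra.
  - split; auto.
Qed.

Lemma core X Y tw qw t1 q1 t2 q2 : classical X -> classical Y -> inZ (tw,qw) ->
  SCw X Y (tw,qw) ->
  inZ (t1,q1) -> t1 < tw -> q1 < qw -> strictP Y (t1,q1) (tw,qw) -> strictP X (tw,qw) (t1,q1) ->
  inZ (t2,q2) -> t2 < tw -> q2 < qw -> strictP X (t2,q2) (tw,qw) -> strictP Y (tw,qw) (t2,q2) ->
  q1 <= q2 -> False.
Proof.
  intros hX hY hw hsc hx1 ht1 hq1 hY1 hX1 hx2 ht2 hq2 hX2 hY2 hq12.
  set (w := (tw,qw)) in *.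
  set (TE := fun q => exists t, 0 <= t < tw /\ strictP Y (t,q) w /\ strictP X w (t,q)).
  set (TE' := fun q => exists t, 0 <= t < tw /\ strictP X (t,q) w /\ strictP Y w (t,q)).
  assert (Hq : 0 <= q1 /\ q2 <= 1) by (zs; lra).
  destruct (cover_open q1 q2 TE TE') as [qs [hqs [hn1 hn2]]]; auto.
  - exists t1. split; auto. zs; lra.
  - exists t2. split; auto. zs; lra.
  - intros s hs [ta [hta [ha1 ha2]]] [tb [htb [hb1 hb2]]].
    assert (hza : inZ (ta,s)) by (zs; lra).
    assert (hzb : inZ (tb,s)) by (zs; lra).
    destruct (Rtotal_order ta tb) as [h|[h|h]].
    + assert (strictP X (ta,s) w).
      { apply strict_trans1 with (tb,s); auto. apply cl_mt; auto. apply strict_weak; auto. }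
      apply (strict_irrefl X _ _ ha2). apply strict_weak; auto.
    + subst tb. apply (strict_irrefl Y _ _ ha1). apply strict_weak; auto.
    + assert (strictP Y (tb,s) w).
      { apply strict_trans1 with (ta,s); auto. apply cl_mt; auto. apply strict_weak; auto. }
      apply (strict_irrefl Y _ _ hb2). apply strict_weak; auto.
  - intros s hs [t [ht [h1 h2]]].
    assert (hz : inZ (t,s)) by (zs; lra).
    destruct (open_better Y (t,s) w hY hw h1) as [d1 [hd1 H1]].
    destruct (open_worse X (t,s) w hX hw h2) as [d2 [hd2 H2]].
    exists (Rmin d1 d2). split. apply Rmin_pos; lra.
    intros s' hs' hd. exists t. split; auto.
    assert (hz' : inZ (t,s')) by (zs; lra).
    assert (hn : near (Rmin d1 d2) (t,s) (t,s')).
    { unfold near; simpl. split; auto. rewrite Rminus_diag, Rabs_R0. apply Rmin_pos; lra. }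
    apply near_min in hn. split; [apply H1|apply H2]; tauto.
  - intros s hs [t [ht [h1 h2]]].
    assert (hz : inZ (t,s)) by (zs; lra).
    destruct (open_better X (t,s) w hX hw h1) as [d1 [hd1 H1]].
    destruct (open_worse Y (t,s) w hY hw h2) as [d2 [hd2 H2]].
    exists (Rmin d1 d2). split. apply Rmin_pos; lra.
    intros s' hs' hd. exists t. split; auto.
    assert (hz' : inZ (t,s')) by (zs; lra).
    assert (hn : near (Rmin d1 d2) (t,s) (t,s')).
    { unfold near; simpl. split; auto. rewrite Rminus_diag, Rabs_R0. apply Rmin_pos; lra. }
    apply near_min in hn. split; [apply H1|apply H2]; tauto.
  -
    assert (hza : inZ (t1,qs)) by (zs; lra).
    assert (hzb : inZ (tw,qs)) by (zs; lra).
    assert (ha : strictP Y (t1,qs) w).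
    { destruct (Rle_lt_or_eq_dec _ _ (proj1 hqs)) as [h|h].
      - apply strict_trans1 with (t1,q1); auto. apply cl_mq; auto. apply strict_weak; auto.
      - subst qs. auto. }
    assert (hb : strictP Y w (tw,qs)) by (apply cl_mq; auto; lra).
    destruct (ivt Y (t1,qs) (tw,qs) w hY hza hzb hw (strict_weak _ _ _ ha) (strict_weak _ _ _ hb))
      as [s [hs [hi1 hi2]]].
    set (ts := t1 + s * (tw - t1)).
    assert (Hl : lin (t1,qs) (tw,qs) s = (ts, qs)) by (unfold lin, ts; simpl; f_equal; ring).
    rewrite Hl in hi1, hi2.
    assert (hs1 : s < 1).
    { destruct (Rle_lt_or_eq_dec _ _ (proj2 hs)) as [h|h]; auto. subst s.
      exfalso. apply (strict_irrefl Y _ _ hb). unfold ts in hi1.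
      replace (t1 + 1 * (tw - t1)) with tw in hi1 by ring. auto. }
    assert (hs0 : 0 < s).
    { destruct (Rle_lt_or_eq_dec _ _ (proj1 hs)) as [h|h]; auto. subst s.
      exfalso. apply (strict_irrefl Y _ _ ha). unfold ts in hi2.
      replace (t1 + 0 * (tw - t1)) with t1 in hi2 by ring. auto. }
    assert (hts1 : t1 < ts) by (unfold ts; nra).
    assert (hts2 : ts < tw) by (unfold ts; nra).
    assert (hzs : inZ (ts,qs)) by (zs; lra).
    assert (hX1' : X (ts,qs) w).
    { apply NNPP. intro hn.
      assert (hs' : strictP X w (ts,qs)) by (apply not_P_strict; auto).
      destruct (open_worse X (ts,qs) w hX hw hs') as [d [hd H]].
      set (e := Rmin (d/2) (ts/2)).
      assert (he1 : e <= d/2) by apply Rmin_l.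
      assert (he2 : e <= ts/2) by apply Rmin_r.
      assert (he : 0 < e) by (apply Rmin_pos; zs; lra).
      apply hn1. exists (ts - e). split. zs; lra. split.
      - apply strict_trans1 with (ts,qs); auto. apply cl_mt; auto; zs; lra.
      - apply H. zs; lra. unfold near; simpl. rewrite Rminus_diag, Rabs_R0.
        replace (ts - e - ts) with (- e) by ring. rewrite Rabs_Ropp, Rabs_right; lra. }
    assert (hX2' : X w (ts,qs)).
    { apply NNPP. intro hn.
      assert (hs' : strictP X (ts,qs) w) by (apply not_P_strict; auto).
      destruct (open_better X (ts,qs) w hX hw hs') as [d [hd H]].
      set (e := Rmin (d/2) ((tw - ts)/2)).
      assert (he1 : e <= d/2) by apply Rmin_l.
      assert (he2 : e <= (tw - ts)/2) by apply Rmin_r.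
      assert (he : 0 < e) by (apply Rmin_pos; lra).
      apply hn2. exists (ts + e). split. zs; lra. split.
      - apply H. zs; lra. unfold near; simpl. rewrite Rminus_diag, Rabs_R0.
        replace (ts + e - ts) with e by ring. rewrite Rabs_right; lra.
      - apply strict_trans2 with (ts,qs); auto. apply cl_mt; auto; zs; lra. }
    assert (Heq := hsc (ts,qs) (conj hX1' hX2') (conj hi1 hi2)).
    unfold w in Heq. injection Heq. lra.
Qed.

Lemma local X Y w : classical X -> classical Y -> inZ w -> SCw X Y w ->
  WE X Y w -> WE Y X w -> False.
Proof.
  intros hX hY hw hsc [[t1 q1] [hx1 [hl1 [h1 h2]]]] [[t2 q2] [hx2 [hl2 [k1 k2]]]].
  destruct w as [tw qw]. unfold ltZ in hl1, hl2; simpl in hl1, hl2.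
  destruct (Rle_or_lt q1 q2) as [h|h].
  - eapply (core X Y tw qw t1 q1 t2 q2); eauto; tauto.
  - eapply (core Y X tw qw t2 q2 t1 q1); eauto; try tauto. apply SCw_sym; auto. lra.
Qed.

Lemma cov X Y tw qw : classical X -> classical Y -> inZ (tw,qw) -> 0 < tw -> 0 < qw ->
  SCw X Y (tw,qw) -> ~ WE X Y (tw,qw) -> ~ WE Y X (tw,qw) -> False.
Proof.
  intros hX hY hw htw hqw hsc hn1 hn2.
  set (w := (tw,qw)) in *.
  assert (h0 : inZ (0,qw)) by (zs; lra).
  assert (hs0 : strictP X (0,qw) w) by (apply cl_mt; auto).
  destruct (open_better X (0,qw) w hX hw hs0) as [d [hd H]].
  set (q0 := qw - Rmin d qw / 2).
  assert (hm1 : Rmin d qw <= d) by apply Rmin_l.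
  assert (hm2 : Rmin d qw <= qw) by apply Rmin_r.
  assert (hm0 : 0 < Rmin d qw) by (apply Rmin_pos; lra).
  assert (hq0 : 0 < q0 < qw) by (unfold q0; lra).
  assert (hz0 : inZ (0,q0)) by (zs; lra).
  assert (hzt : inZ (tw,q0)) by (zs; lra).
  assert (ha : X (0,q0) w).
  { apply strict_weak, H; auto. unfold near; simpl. rewrite Rminus_diag, Rabs_R0.
    unfold q0. replace (qw - Rmin d qw / 2 - qw) with (- (Rmin d qw / 2)) by ring.
    rewrite Rabs_Ropp, Rabs_right; lra. }
  assert (hb : strictP X w (tw,q0)) by (apply cl_mq; auto; lra).
  destruct (ivt X (0,q0) (tw,q0) w hX hz0 hzt hw ha (strict_weak _ _ _ hb)) as [s [hs [hi1 hi2]]].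
  set (ts := 0 + s * (tw - 0)).
  assert (Hl : lin (0,q0) (tw,q0) s = (ts, q0)) by (unfold lin, ts; simpl; f_equal; ring).
  rewrite Hl in hi1, hi2.
  assert (hs1 : s < 1).
  { destruct (Rle_lt_or_eq_dec _ _ (proj2 hs)) as [h|h]; auto. subst s.
    exfalso. apply (strict_irrefl X _ _ hb). unfold ts in hi1.
    replace (0 + 1 * (tw - 0)) with tw in hi1 by ring. auto. }
  assert (hts : 0 <= ts < tw) by (unfold ts; nra).
  assert (hzs : inZ (ts,q0)) by (zs; lra).
  assert (hY1 : Y (ts,q0) w).
  { apply NNPP. intro hn.
    assert (hs' : strictP Y w (ts,q0)) by (apply not_P_strict; auto).
    destruct (open_worse Y (ts,q0) w hY hw hs') as [d' [hd' H']].
    set (e := Rmin (d'/2) ((qw - q0)/2)).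
    assert (he1 : e <= d'/2) by apply Rmin_l.
    assert (he2 : e <= (qw - q0)/2) by apply Rmin_r.
    assert (he : 0 < e) by (apply Rmin_pos; lra).
    apply hn2. exists (ts, q0 + e). split. zs; lra. split. zs; lra. split.
    - apply strict_trans1 with (ts,q0); auto. apply cl_mq; auto; zs; lra.
    - apply H'. zs; lra. unfold near; simpl. rewrite Rminus_diag, Rabs_R0.
      replace (q0 + e - q0) with e by ring. rewrite Rabs_right; lra. }
  assert (hY2 : Y w (ts,q0)).
  { apply NNPP. intro hn.
    assert (hs' : strictP Y (ts,q0) w) by (apply not_P_strict; auto).
    destruct (open_better Y (ts,q0) w hY hw hs') as [d' [hd' H']].
    set (e := Rmin (d'/2) (q0/2)).
    assert (he1 : e <= d'/2) by apply Rmin_l.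
    assert (he2 : e <= q0/2) by apply Rmin_r.
    assert (he : 0 < e) by (apply Rmin_pos; lra).
    apply hn1. exists (ts, q0 - e). split. zs; lra. split. zs; lra. split.
    - apply H'. zs; lra. unfold near; simpl. rewrite Rminus_diag, Rabs_R0.
      replace (q0 - e - q0) with (- e) by ring. rewrite Rabs_Ropp, Rabs_right; lra.
    - apply strict_trans2 with (ts,q0); auto. apply cl_mq; auto; zs; lra. }
  assert (Heq := hsc (ts,q0) (conj hi1 hi2) (conj hY1 hY2)).
  unfold w in Heq. injection Heq. lra.
Qed.

Lemma seg X Y u v : classical X -> classical Y -> (forall w, inZ w -> SCw X Y w) ->
  inZ u -> inZ v -> 0 < fst u -> 0 < snd u -> 0 < fst v -> 0 < snd v ->
  WE X Y u -> WE Y X v -> False.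
Proof.
  intros hX hY hsc hu hv h1 h2 h3 h4 hE1 hE2.
  destruct (cover_open 0 1 (fun s => WE X Y (lin u v s)) (fun s => WE Y X (lin u v s)))
    as [s [hs [hn1 hn2]]].
  - lra.
  - rewrite lin0; auto.
  - rewrite lin1; auto.
  - intros s hs k1 k2. apply (local X Y (lin u v s)); auto. apply lin_inZ; auto.
    apply hsc. apply lin_inZ; auto.
  - apply open2_param; auto. apply WE_open; auto.
  - apply open2_param; auto. apply WE_open; auto.
  - assert (hz := lin_inZ u v s hu hv hs).
    destruct u as [tu qu], v as [tv qv]. unfold lin in *; simpl in *.
    apply (cov X Y (tu + s * (tv - tu)) (qu + s * (qv - qu))); auto; try nra.
Qed.

Lemma not_prec_WE X Y : classical X -> classical Y -> X <> Y -> ~ prec X Y ->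
  exists w, inZ w /\ 0 < fst w /\ 0 < snd w /\ WE X Y w.
Proof.
  intros hX hY hne hn. unfold prec in hn.
  apply NNPP. intro hno. apply hn. split; auto.
  intros z hz x [hx hle] hYx. apply NNPP. intro hXx.
  destruct hle as [e|hlt].
  - subst x. apply hXx. apply cl_refl; auto.
  - apply hno. exists z. split; auto. unfold ltZ in hlt. unfold inZ in hx.
    split. lra. split. lra. apply (strengthen X Y x z); auto.
Qed.

Lemma totality X Y : classical X -> classical Y -> single_crossing X Y -> X <> Y ->
  prec X Y \/ prec Y X.
Proof.
  intros hX hY hs hne. apply NNPP. intro hn.
  assert (hsc : forall w, inZ w -> SCw X Y w) by (intros; apply SC_SCw; auto).
  destruct (not_prec_WE X Y hX hY hne) as [w1 [hw1 [a1 [b1 hE1]]]]. tauto.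
  destruct (not_prec_WE Y X hY hX (not_eq_sym hne)) as [w2 [hw2 [a2 [b2 hE2]]]]. tauto.
  set (c := (fst w1, snd w2)).
  assert (hc : inZ c) by (unfold c; zs; lra).
  destruct (classic (WE X Y c)) as [h|h].
  - apply (seg X Y c w2); auto; unfold c; simpl; lra.
  - destruct (classic (WE Y X c)) as [h'|h'].
    + apply (seg X Y w1 c); auto; unfold c; simpl; lra.
    + destruct w1 as [t1 q1], w2 as [t2 q2]. simpl in *.
      apply (cov X Y t1 q2); auto; zs; lra.
Qed.

Definition pth (c d : R * R) (l : R) : R * R := lin (fst c, snd d) (fst d, snd c) l.

Lemma pth_eq c d l : pth c d l = (fst c + l * (fst d - fst c), snd d + l * (snd c - snd d)).
Proof. reflexivity. Qed.

Lemma pth_inZ c d l : inZ c -> inZ d -> 0 <= l <= 1 -> inZ (pth c d l).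
Proof. intros hc hd hl. apply lin_inZ; auto; zs; lra. Qed.

Lemma pth_gt c d l : ltZ c d -> 0 < l < 1 -> ltZ c (pth c d l).
Proof. intros h hl. rewrite pth_eq. zs. split; nra. Qed.

Lemma pth_dom X c d l m : classical X -> inZ c -> inZ d -> ltZ c d -> 0 <= l -> l < m -> m <= 1 ->
  strictP X (pth c d l) (pth c d m).
Proof.
  intros hX hc hd hlt h1 h2 h3. rewrite !pth_eq.
  apply dom_strict; auto; try (rewrite <- pth_eq; apply pth_inZ; auto; lra); zs; try nra.
  intro he. injection he. intros. nra.
Qed.

Lemma indiff_sym P x y : indiff P x y -> indiff P y x.
Proof. intros [a b]; split; auto. Qed.

Lemma lam_exists X c d : classical X -> inZ c -> inZ d -> ltZ c d ->
  exists l, 0 < l < 1 /\ indiff X c (pth c d l).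
Proof.
  intros hX hc hd hlt.
  assert (ha : inZ (fst c, snd d)) by (zs; lra).
  assert (hb : inZ (fst d, snd c)) by (zs; lra).
  assert (h1 : strictP X (fst c, snd d) c).
  { destruct c as [tc qc]. apply cl_mq; auto. zs; lra. }
  assert (h2 : strictP X c (fst d, snd c)).
  { destruct c as [tc qc]. apply cl_mt; auto. zs; lra. }
  destruct (ivt X _ _ c hX ha hb hc (strict_weak _ _ _ h1) (strict_weak _ _ _ h2)) as [s [hs hi]].
  exists s. split.
  - split.
    + destruct (Rle_lt_or_eq_dec _ _ (proj1 hs)) as [h|h]; auto. subst s. rewrite lin0 in hi.
      exfalso. apply (strict_irrefl X _ _ h1). apply hi.
    + destruct (Rle_lt_or_eq_dec _ _ (proj2 hs)) as [h|h]; auto. subst s. rewrite lin1 in hi.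
      exfalso. apply (strict_irrefl X _ _ h2). apply hi.
  - apply indiff_sym. exact hi.
Qed.

Lemma rsc_cl dom X : rich_single_crossing dom -> dom X -> classical X.
Proof. intros [h _] hX. auto. Qed.
Lemma rsc_sc dom X Y : rich_single_crossing dom -> dom X -> dom Y -> X <> Y -> single_crossing X Y.
Proof. intros [_ [h _]] hX hY hne. auto. Qed.
Lemma rsc_rich dom x y : rich_single_crossing dom -> inZ x -> inZ y -> ltZ x y ->
  exists Rl, dom Rl /\ indiff Rl x y.
Proof. intros [_ [_ h]]. auto. Qed.

Lemma rsc_tot dom X Y : rich_single_crossing dom -> dom X -> dom Y -> X <> Y -> prec X Y \/ prec Y X.
Proof.
  intros H hX hY hne. apply totality; auto. eapply rsc_cl; eauto. eapply rsc_cl; eauto.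
  eapply rsc_sc; eauto.
Qed.

Lemma rsc_uniq dom X Y x y : rich_single_crossing dom -> dom X -> dom Y -> inZ x -> inZ y ->
  ltZ x y -> indiff X x y -> indiff Y x y -> X = Y.
Proof.
  intros H hX hY hx hy hlt h1 h2. apply NNPP. intro hne.
  assert (hs := rsc_sc dom X Y H hX hY hne).
  assert (e := hs y y x y h1 h2 (conj (cl_refl X y (rsc_cl dom X H hX) hy) (cl_refl X y (rsc_cl dom X H hX) hy))
                  (conj (cl_refl Y y (rsc_cl dom Y H hY) hy) (cl_refl Y y (rsc_cl dom Y H hY) hy))).
  subst. unfold ltZ in hlt. lra.
Qed.

Lemma G1 dom X Y x z : rich_single_crossing dom -> dom X -> dom Y -> inZ x -> inZ z -> ltZ x z ->
  X x z -> ~ Y x z -> prec X Y.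
Proof.
  intros H hX hY hx hz hlt h1 h2.
  assert (hne : X <> Y) by (intro e; subst; auto).
  destruct (rsc_tot dom X Y H hX hY hne) as [h|[_ h]]; auto.
  exfalso. apply h2. apply (h z hz x); auto. split; auto. right; auto.
Qed.

Lemma Ord dom X Y c d m n : rich_single_crossing dom -> dom X -> dom Y -> inZ c -> inZ d -> ltZ c d ->
  0 < m < 1 -> 0 < n < 1 -> indiff X c (pth c d m) -> indiff Y c (pth c d n) -> m < n -> prec X Y.
Proof.
  intros H hX hY hc hd hlt hm hn hi1 hi2 hmn.
  apply (G1 dom X Y c (pth c d m)); auto. apply pth_inZ; auto; lra. apply pth_gt; auto.
  apply hi1.
  intro h. assert (hY' := rsc_cl dom Y H hY).
  assert (strictP Y (pth c d m) c).
  { apply (strict_trans1 Y _ (pth c d n)); auto. apply pth_dom; auto; lra. apply hi2. }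
  apply (strict_irrefl Y _ _ H0). auto.
Qed.

Lemma prec_lam dom X Y c d m n : rich_single_crossing dom -> dom X -> dom Y -> inZ c -> inZ d -> ltZ c d ->
  0 < m < 1 -> 0 < n < 1 -> indiff X c (pth c d m) -> indiff Y c (pth c d n) -> prec X Y -> m < n.
Proof.
  intros H hX hY hc hd hlt hm hn hi1 hi2 [hne hp].
  destruct (Rtotal_order m n) as [h|[h|h]]; auto; exfalso.
  - subst n. apply hne. apply (rsc_uniq dom X Y c (pth c d m)); auto. apply pth_inZ; auto; lra.
    apply pth_gt; auto.
  - assert (hX' := rsc_cl dom X H hX).
    assert (strictP X (pth c d n) c).
    { apply (strict_trans1 X _ (pth c d m)); auto. apply pth_dom; auto; lra. apply hi1. }
    apply (strict_irrefl X _ _ H0). apply (hp (pth c d n)). apply pth_inZ; auto; lra.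
    split; auto. right. apply pth_gt; auto. apply hi2.
Qed.

Lemma c0d0 : inZ (0,0) /\ inZ (1,1) /\ ltZ (0,0) (1,1).
Proof. zs; lra. Qed.

Lemma prec_asym dom X Y : rich_single_crossing dom -> dom X -> dom Y -> prec X Y -> prec Y X -> False.
Proof.
  intros H hX hY h1 h2. destruct c0d0 as [hc [hd hlt]].
  destruct (lam_exists X _ _ (rsc_cl dom X H hX) hc hd hlt) as [m [hm hi1]].
  destruct (lam_exists Y _ _ (rsc_cl dom Y H hY) hc hd hlt) as [n [hn hi2]].
  assert (a := prec_lam dom X Y _ _ m n H hX hY hc hd hlt hm hn hi1 hi2 h1).
  assert (b := prec_lam dom Y X _ _ n m H hY hX hc hd hlt hn hm hi2 hi1 h2). lra.
Qed.

Lemma prec_trans dom X Y Z : rich_single_crossing dom -> dom X -> dom Y -> dom Z ->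
  prec X Y -> prec Y Z -> prec X Z.
Proof.
  intros H hX hY hZ [n1 h1] [n2 h2]. split.
  - intro e. subst Z. apply (prec_asym dom X Y); auto; split; auto.
  - intros z hz x hb h. apply h1; auto.
Qed.

Lemma precsim_trans dom X Y Z : rich_single_crossing dom -> dom X -> dom Y -> dom Z ->
  precsim X Y -> precsim Y Z -> precsim X Z.
Proof.
  unfold precsim. intros H hX hY hZ [h1|h1] [h2|h2].
  - left. apply (prec_trans dom X Y Z); auto.
  - subst; tauto.
  - subst; tauto.
  - subst; tauto.
Qed.

Lemma G3 Y R' x z : classical Y -> classical R' -> inZ x -> inZ z -> ltZ x z ->
  prec Y R' -> Y z x -> R' z x.
Proof.
  intros hY hR hx hz hlt [_ hp] h.
  destruct x as [tx qx], z as [tz qz]. unfold ltZ in hlt; simpl in hlt.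
  set (u := fun n:nat => (tx + (tz - tx) / (INR n + 2), qx)).
  assert (hu : forall n, 0 < (tz - tx) / (INR n + 2) < tz - tx).
  { intro n. pose proof (pos_INR n). split. apply Rdiv_lt_0_compat; lra.
    apply Rmult_lt_reg_r with (INR n + 2); [lra|]. unfold Rdiv. rewrite Rmult_assoc, Rinv_l; nra. }
  apply (lim_lo R' (tz,qz) u); auto.
  - intro n. destruct (hu n).
    assert (hzn : inZ (u n)) by (unfold u; zs; lra).
    assert (hs : strictP Y (tz,qz) (u n)).
    { apply strict_trans2 with (tx,qx); auto. unfold u. apply cl_mt; auto. lra. }
    destruct (cl_total R' (tz,qz) (u n) hR hz hzn) as [k|k]; auto.
    exfalso. apply (strict_irrefl Y _ _ hs). apply (hp (tz,qz) hz (u n)); auto.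
    split; auto. right. unfold u; zs; lra.
  - unfold cvZ, u; simpl. split.
    + apply cv_bound with (tz - tx). intro n. destruct (hu n).
      replace (tx + (tz - tx) / (INR n + 2) - tx) with ((tz - tx) / (INR n + 2)) by ring.
      rewrite Rabs_right; [|lra]. unfold Rdiv. apply Rmult_le_compat_l; [lra|].
      apply Rinv_le_contravar; pose proof (pos_INR n); lra.
    + apply cv_const.
Qed.

Lemma choice_cond {A B : Type} (C : A -> Prop) (Q : A -> B -> Prop) (b0 : B) :
  (forall a, C a -> exists b, Q a b) -> exists f : A -> B, forall a, C a -> Q a (f a).
Proof.
  intro H.
  assert (H' : forall a, exists b, C a -> Q a b).
  { intro a. destruct (classic (C a)) as [h|h].
    - destruct (H a h) as [b hb]. exists b; auto.
    - exists b0. intro; contradiction. }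
  exists (fun a => proj1_sig (constructive_indefinite_description _ (H' a))).
  intros a ha. exact (proj2_sig (constructive_indefinite_description _ (H' a)) ha).
Qed.

Lemma leZ_lt_false a b : leZ a b -> ltZ b a -> False.
Proof. unfold leZ, ltZ. intros [e|h] h'. subst. lra. lra. Qed.

Lemma vseq k : 0 < k -> (forall n, 0 < k / (INR n + 2) < k) /\
  (forall n, k / (INR (S n) + 2) < k / (INR n + 2)) /\
  (forall n, k / (INR n + 2) <= k / (INR n + 1)).
Proof.
  intro hk. split; [|split].
  - intro n. pose proof (pos_INR n). split. apply Rdiv_lt_0_compat; lra.
    apply Rmult_lt_reg_r with (INR n + 2); [lra|]. unfold Rdiv. rewrite Rmult_assoc, Rinv_l; nra.
  - intro n. rewrite S_INR. pose proof (pos_INR n). unfold Rdiv. apply Rmult_lt_compat_l; auto.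
    apply Rinv_lt_contravar; nra.
  - intro n. pose proof (pos_INR n). unfold Rdiv. apply Rmult_le_compat_l; [lra|].
    apply Rinv_le_contravar; lra.
Qed.

Lemma base dom D F : rich_single_crossing dom -> (forall X, D X -> dom X) ->
  (forall X Y Z, D X -> D Y -> dom Z -> precsim X Z -> precsim Z Y -> D Z) ->
  mechanism D F -> monotone_mech D F -> VF_continuous D F ->
  forall R1 R2, D R1 -> D R2 -> prec R1 R2 -> ltZ (F R1) (F R2) ->
  (forall Y, D Y -> ~ (ltZ (F R1) (F Y) /\ ltZ (F Y) (F R2))) ->
  R1 (F R1) (F R2) /\ R2 (F R2) (F R1).
Proof.
  intros H hD hconv hmech hmono hcont R1 R2 hR1 hR2 hp hlt hnb.
  set (c := F R1) in *. set (d := F R2) in *.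
  assert (hc : inZ c) by (apply hmech; auto).
  assert (hd : inZ d) by (apply hmech; auto).
  assert (hdR1 := hD R1 hR1). assert (hdR2 := hD R2 hR2).
  assert (hcl1 := rsc_cl dom R1 H hdR1). assert (hcl2 := rsc_cl dom R2 H hdR2).
  destruct (lam_exists R1 c d hcl1 hc hd hlt) as [l0 [hl0 hi0]].
  destruct (lam_exists R2 c d hcl2 hc hd hlt) as [l1 [hl1 hi1]].
  assert (hl01 : l0 < l1) by (apply (prec_lam dom R1 R2 c d); auto).
  destruct (choice_cond (fun l => 0 < l < 1) (fun l P => dom P /\ indiff P c (pth c d l)) R1) as [P HP].
  { intros l hl. apply (rsc_rich dom c (pth c d l) H hc). apply pth_inZ; auto; lra. apply pth_gt; auto. }
  assert (hP0 : P l0 = R1).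
  { destruct (HP l0 hl0). apply (rsc_uniq dom _ _ c (pth c d l0)); auto. apply pth_inZ; auto; lra. apply pth_gt; auto. }
  assert (hP1 : P l1 = R2).
  { destruct (HP l1 hl1). apply (rsc_uniq dom _ _ c (pth c d l1)); auto. apply pth_inZ; auto; lra. apply pth_gt; auto. }
  assert (hPprec : forall a b, l0 <= a -> a < b -> b <= l1 -> prec (P a) (P b)).
  { intros a b h1 h2 h3. destruct (HP a) as [k1 k2]; [lra|]. destruct (HP b) as [k3 k4]; [lra|].
    apply (Ord dom _ _ c d a b); auto; lra. }
  assert (hPD : forall a, l0 <= a <= l1 -> D (P a)).
  { intros a ha. destruct (Rle_lt_or_eq_dec _ _ (proj1 ha)) as [h|h]; [|subst a; rewrite hP0; auto].
    destruct (Rle_lt_or_eq_dec _ _ (proj2 ha)) as [h'|h']; [|subst a; rewrite hP1; auto].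
    apply (hconv R1 R2); auto. apply HP; lra.
    left. rewrite <- hP0. apply hPprec; lra. left. rewrite <- hP1. apply hPprec; lra. }
  assert (hmon : forall a b, l0 <= a -> a <= b -> b <= l1 -> leZ (F (P a)) (F (P b))).
  { intros a b h1 h2 h3. destruct (Rle_lt_or_eq_dec _ _ h2) as [h|h].
    - apply hmono; try apply hPD; try lra. apply hPprec; lra.
    - subst b. left. reflexivity. }
  assert (hval : forall a, l0 <= a <= l1 -> F (P a) = c \/ F (P a) = d).
  { intros a ha. assert (k1 := hmon l0 a ltac:(lra) ltac:(lra) ltac:(lra)).
    assert (k2 := hmon a l1 ltac:(lra) ltac:(lra) ltac:(lra)).
    rewrite hP0 in k1. rewrite hP1 in k2. fold c in k1. fold d in k2.
    destruct k1 as [e|k1]; auto. destruct k2 as [e|k2]; auto.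
    exfalso. apply (hnb (P a)); auto. }
  set (Sset := fun a => l0 <= a <= l1 /\ F (P a) = c).
  assert (hbd : bound Sset) by (exists l1; intros x [hx _]; lra).
  assert (hne : exists x, Sset x) by (exists l0; split; [lra|rewrite hP0; reflexivity]).
  destruct (completeness Sset hbd hne) as [sg [hub hlub]].
  assert (hs0 : l0 <= sg) by (apply hub; split; [lra|rewrite hP0; reflexivity]).
  assert (hs1 : sg <= l1) by (apply hlub; intros x [hx _]; lra).
  assert (hleft : forall a, l0 <= a < sg -> F (P a) = c).
  { intros a ha. apply NNPP. intro hn.
    assert (sg <= a); [|lra]. apply hlub. intros x [hx hFx].
    destruct (Rle_or_lt x a) as [h|h]; auto. exfalso. apply hn.
    assert (k1 := hmon l0 a ltac:(lra) ltac:(lra) ltac:(lra)).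
    assert (k2 := hmon a x ltac:(lra) ltac:(lra) ltac:(lra)).
    rewrite hP0 in k1. fold c in k1. rewrite hFx in k2.
    destruct k1 as [e|k1]; auto. exfalso. apply (leZ_lt_false _ _ k2 k1). }
  assert (hright : forall a, sg < a <= l1 -> F (P a) = d).
  { intros a ha. destruct (hval a) as [h|h]; [lra| |auto].
    assert (a <= sg) by (apply hub; split; [lra|auto]). lra. }
  assert (hPs : D (P sg)) by (apply hPD; lra).
  assert (hdPs : dom (P sg) /\ indiff (P sg) c (pth c d sg)) by (apply HP; lra).
  assert (Hcont : forall (u : nat -> R) e, (forall n, l0 <= u n <= l1) ->
            ((forall n, u n < u (S n)) \/ (forall n, u (S n) < u n)) -> Un_cv u sg ->
            (forall n, F (P (u n)) = e) -> indiff (P sg) e (F (P sg))).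
  { intros u e hu hmu hcv hFe.
    destruct (hcont (P sg) (fun n => P (u n)) hPs) as [L [hL [hcvL hiL]]].
    - intro n. apply hPD. apply hu.
    - destruct hmu as [h|h]; [left|right]; intro n; left; apply hPprec; try apply hu; auto.
    - split.
      + intros A hA hpA. assert (hdA := hD A hA). assert (hclA := rsc_cl dom A H hdA).
        destruct (lam_exists A c d hclA hc hd hlt) as [m [hm him]].
        assert (hms : m < sg) by (apply (prec_lam dom A (P sg) c d m sg); auto; try apply hdPs; lra).
        destruct (hcv (sg - m)) as [N HN]; [lra|]. exists N. intros n hn.
        specialize (HN n hn). unfold Rdist in HN. apply Rabs_def2 in HN.
        destruct (HP (u n)) as [k1 k2]. split; [|]; specialize (hu n); lra.
        apply (Ord dom A (P (u n)) c d m (u n)); auto. split; specialize (hu n); lra. lra.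
      + intros B hB hpB. assert (hdB := hD B hB). assert (hclB := rsc_cl dom B H hdB).
        destruct (lam_exists B c d hclB hc hd hlt) as [m [hm him]].
        assert (hms : sg < m) by (apply (prec_lam dom (P sg) B c d sg m); auto; try apply hdPs; lra).
        destruct (hcv (m - sg)) as [N HN]; [lra|]. exists N. intros n hn.
        specialize (HN n hn). unfold Rdist in HN. apply Rabs_def2 in HN.
        destruct (HP (u n)) as [k1 k2]. split; [|]; specialize (hu n); lra.
        apply (Ord dom (P (u n)) B c d (u n) m); auto. split; specialize (hu n); lra. lra.
    - assert (hLe : L = e).
      { destruct hcvL as [h1 h2]. destruct L as [l1' l2'], e as [e1 e2]. simpl in *.
        assert (Un_cv (fun _ => e1) l1').
        { intros eps heps. destruct (h1 eps heps) as [N HN]. exists N. intros n hn.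
          specialize (HN n hn). rewrite hFe in HN. exact HN. }
        assert (Un_cv (fun _ => e2) l2').
        { intros eps heps. destruct (h2 eps heps) as [N HN]. exists N. intros n hn.
          specialize (HN n hn). rewrite hFe in HN. exact HN. }
        f_equal; eapply UL_sequence; eauto; apply cv_const. }
      subst L. exact hiL. }
  assert (Hind : indiff (P sg) c d).
  { destruct (Rle_lt_or_eq_dec _ _ hs0) as [hA|hA].
    - assert (HL : indiff (P sg) c (F (P sg))).
      { destruct (vseq (sg - l0)) as [v1 [v2 v3]]; [lra|].
        apply (Hcont (fun n => sg - (sg - l0) / (INR n + 2)) c).
        - intro n. specialize (v1 n). lra.
        - left. intro n. specialize (v2 n). lra.
        - apply cv_bound with (sg - l0). intro n. specialize (v1 n). specialize (v3 n).
          replace (sg - (sg - l0) / (INR n + 2) - sg) with (- ((sg - l0) / (INR n + 2))) by ring.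
          rewrite Rabs_Ropp, Rabs_right; lra.
        - intro n. apply hleft. specialize (v1 n). lra. }
      destruct (Rle_lt_or_eq_dec _ _ hs1) as [hB|hB].
      + assert (HR : indiff (P sg) d (F (P sg))).
        { destruct (vseq (l1 - sg)) as [v1 [v2 v3]]; [lra|].
          apply (Hcont (fun n => sg + (l1 - sg) / (INR n + 2)) d).
          - intro n. specialize (v1 n). lra.
          - right. intro n. specialize (v2 n). lra.
          - apply cv_bound with (l1 - sg). intro n. specialize (v1 n). specialize (v3 n).
            replace (sg + (l1 - sg) / (INR n + 2) - sg) with ((l1 - sg) / (INR n + 2)) by ring.
            rewrite Rabs_right; lra.
          - intro n. apply hright. specialize (v1 n). lra. }
        assert (hclS : classical (P sg)) by (exact (rsc_cl dom (P sg) H (proj1 hdPs))).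
        destruct HL as [a1 a2], HR as [b1 b2]. split; eapply cl_trans; eauto.
      + subst sg. rewrite hP1 in HL |- *. exact HL.
    - subst sg. assert (HR : indiff (P l0) d (F (P l0))).
      { destruct (vseq (l1 - l0)) as [v1 [v2 v3]]; [lra|].
        apply (Hcont (fun n => l0 + (l1 - l0) / (INR n + 2)) d).
        - intro n. specialize (v1 n). lra.
        - right. intro n. specialize (v2 n). lra.
        - apply cv_bound with (l1 - l0). intro n. specialize (v1 n). specialize (v3 n).
          replace (l0 + (l1 - l0) / (INR n + 2) - l0) with ((l1 - l0) / (INR n + 2)) by ring.
          rewrite Rabs_right; lra.
        - intro n. apply hright. specialize (v1 n). lra. }
      rewrite hP0 in HR |- *. fold c in HR. apply indiff_sym; auto. }
  split.
  - apply NNPP. intro hn.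
    destruct (Rle_lt_or_eq_dec _ _ hs0) as [hA|hA].
    + assert (hpp : prec R1 (P sg)) by (rewrite <- hP0; apply hPprec; lra).
      apply hn. apply (proj2 hpp d hd c). split; auto. right; auto. apply Hind.
    + subst sg. rewrite hP0 in Hind. apply hn. apply Hind.
  - apply NNPP. intro hn.
    destruct (Rle_lt_or_eq_dec _ _ hs1) as [hA|hA].
    + assert (hpp : prec (P sg) R2) by (rewrite <- hP1; apply hPprec; lra).
      apply hn. apply (G3 (P sg) R2 c d); auto. exact (rsc_cl dom (P sg) H (proj1 hdPs)). apply Hind.
    + subst sg. rewrite hP1 in Hind. apply hn. apply Hind.
Qed.

Definition btw (c d e : R * R) : bool :=
  if excluded_middle_informative (ltZ c e /\ ltZ e d) then true else false.
Definition cnt (l : list (R * R)) (c d : R * R) : nat := length (filter (btw c d) l).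

Lemma filter_le {A} (p q : A -> bool) l : (forall x, p x = true -> q x = true) ->
  (length (filter p l) <= length (filter q l))%nat.
Proof.
  intro H. induction l as [|a l IH]; simpl; auto.
  destruct (p a) eqn:e1; destruct (q a) eqn:e2; simpl; try lia.
  rewrite (H a e1) in e2. discriminate.
Qed.

Lemma filter_lt {A} (p q : A -> bool) l e : (forall x, p x = true -> q x = true) ->
  In e l -> p e = false -> q e = true -> (length (filter p l) < length (filter q l))%nat.
Proof.
  intros H hin hp hq. induction l as [|a l IH]; simpl in *; [contradiction|].
  destruct hin as [h|h].
  - subst a. rewrite hp, hq. simpl. pose proof (filter_le p q l H). lia.
  - specialize (IH h). destruct (p a) eqn:e1; destruct (q a) eqn:e2; simpl; try lia.
    rewrite (H a e1) in e2. discriminate.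
Qed.

Lemma btw_true c d e : btw c d e = true <-> (ltZ c e /\ ltZ e d).
Proof. unfold btw. destruct (excluded_middle_informative _); split; intros; auto; discriminate || contradiction. Qed.

Lemma ltZ_trans a b c : ltZ a b -> ltZ b c -> ltZ a c.
Proof. unfold ltZ; lra. Qed.
Lemma ltZ_irrefl a : ltZ a a -> False.
Proof. unfold ltZ; lra. Qed.

Lemma cnt_lt1 l c d e : In e l -> ltZ c e -> ltZ e d -> (cnt l c e < cnt l c d)%nat.
Proof.
  intros hin h1 h2. apply filter_lt with e; auto.
  - intros x hx. apply btw_true in hx. apply btw_true. destruct hx; split; auto. eapply ltZ_trans; eauto.
  - destruct (btw c e e) eqn:h; auto. apply btw_true in h. destruct h as [_ h]. exfalso; eapply ltZ_irrefl; eauto.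
  - apply btw_true; auto.
Qed.
Lemma cnt_lt2 l c d e : In e l -> ltZ c e -> ltZ e d -> (cnt l e d < cnt l c d)%nat.
Proof.
  intros hin h1 h2. apply filter_lt with e; auto.
  - intros x hx. apply btw_true in hx. apply btw_true. destruct hx; split; auto. eapply ltZ_trans; eauto.
  - destruct (btw e d e) eqn:h; auto. apply btw_true in h. destruct h as [h _]. exfalso; eapply ltZ_irrefl; eauto.
  - apply btw_true; auto.
Qed.

Lemma main_gen dom D F : rich_single_crossing dom -> (forall X, D X -> dom X) ->
  (forall X Y Z, D X -> D Y -> dom Z -> precsim X Z -> precsim Z Y -> D Z) ->
  mechanism D F -> monotone_mech D F -> VF_continuous D F -> finite_range D F ->
  strategy_proof D F.
Proof.
  intros H hD hconv hmech hmono hcont [l hl].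
  assert (Hpair : forall n R1 R2, D R1 -> D R2 -> prec R1 R2 -> ltZ (F R1) (F R2) ->
            (cnt l (F R1) (F R2) <= n)%nat -> R1 (F R1) (F R2) /\ R2 (F R2) (F R1)).
  { induction n as [|n IH]; intros R1 R2 hR1 hR2 hp hlt hcnt;
    (destruct (classic (exists Y, D Y /\ ltZ (F R1) (F Y) /\ ltZ (F Y) (F R2))) as [[Y [hY [h1 h2]]]|hno];
     [|apply (base dom D F); auto; intros Y hY hb; apply hno; exists Y; tauto]).
    - exfalso. pose proof (cnt_lt1 l _ _ _ (hl Y hY) h1 h2). lia.
    - assert (hdY := hD Y hY).
      assert (hp1 : prec R1 Y).
      { destruct (rsc_tot dom R1 Y H (hD R1 hR1) hdY) as [k|k]; auto.
        - intro e; subst; eapply ltZ_irrefl; eauto.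
        - exfalso. apply (leZ_lt_false _ _ (hmono Y R1 hY hR1 k) h1). }
      assert (hp2 : prec Y R2).
      { destruct (rsc_tot dom Y R2 H hdY (hD R2 hR2)) as [k|k]; auto.
        - intro e; subst; eapply ltZ_irrefl; eauto.
        - exfalso. apply (leZ_lt_false _ _ (hmono R2 Y hR2 hY k) h2). }
      pose proof (cnt_lt1 l _ _ _ (hl Y hY) h1 h2).
      pose proof (cnt_lt2 l _ _ _ (hl Y hY) h1 h2).
      destruct (IH R1 Y hR1 hY hp1 h1 ltac:(lia)) as [a1 a2].
      destruct (IH Y R2 hY hR2 hp2 h2 ltac:(lia)) as [b1 b2].
      assert (hc1 := rsc_cl dom R1 H (hD R1 hR1)).
      assert (hc2 := rsc_cl dom R2 H (hD R2 hR2)).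
      assert (hcY := rsc_cl dom Y H hdY).
      assert (hzR1 : inZ (F R1)) by (apply hmech; auto).
      assert (hzR2 : inZ (F R2)) by (apply hmech; auto).
      assert (hzY : inZ (F Y)) by (apply hmech; auto).
      split.
      + apply (cl_trans R1 _ (F Y)); [exact hc1|exact a1|]. assert (hb : box (F R2) (F Y)) by (split; [auto|right; auto]).
        apply (proj2 hp1 (F R2) hzR2 (F Y) hb b1).
      + apply (cl_trans R2 _ (F Y)); [exact hc2|exact b2|]. apply (G3 Y R2); auto. }
  intros R1 R2 hR1 hR2.
  assert (hc1 := rsc_cl dom R1 H (hD R1 hR1)).
  assert (hz1 : inZ (F R1)) by (apply hmech; auto).
  assert (hz2 : inZ (F R2)) by (apply hmech; auto).
  destruct (classic (R1 = R2)) as [e|hne].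
  { subst. apply cl_refl; auto. }
  destruct (rsc_tot dom R1 R2 H (hD R1 hR1) (hD R2 hR2) hne) as [k|k].
  - destruct (hmono R1 R2 hR1 hR2 k) as [e|hlt].
    + rewrite e. apply cl_refl; auto.
    + apply (Hpair (cnt l (F R1) (F R2)) R1 R2); auto.
  - destruct (hmono R2 R1 hR2 hR1 k) as [e|hlt].
    + rewrite e. apply cl_refl; auto.
    + apply (Hpair (cnt l (F R2) (F R1)) R2 R1); auto.
Qed.

Theorem mainTheorem8 :
  forall dom : Pref -> Prop,
    rich_single_crossing dom ->
    (forall F : Pref -> R * R,
        mechanism dom F -> monotone_mech dom F -> VF_continuous dom F ->
        finite_range dom F -> strategy_proof dom F) /\
    (forall (lo hi : Pref), dom lo -> dom hi ->
      forall F : Pref -> R * R,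
        mechanism (interval dom lo hi) F -> monotone_mech (interval dom lo hi) F ->
        VF_continuous (interval dom lo hi) F ->
        finite_range (interval dom lo hi) F -> strategy_proof (interval dom lo hi) F).
Proof.
  intros dom H. split.
  - intros F. apply (main_gen dom); auto.
  - intros lo hi hlo hhi F. apply (main_gen dom); auto.
    + intros X [h _]; auto.
    + intros X Y Z [hX [hX1 hX2]] [hY [hY1 hY2]] hZ h1 h2. split; auto. split.
      * apply (precsim_trans dom lo X Z); auto.
      * apply (precsim_trans dom Z Y hi); auto.
Qed.
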